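(* Let $\mathbf K$ be a commutative field, $p,q,r\in\mathbb N$, $A\in\mathbf K^{\mathcal M_{p\times r}}$ and $B\in\mathbf K^{\mathcal M_{r\times q}}$. Then $$\dim\big(\overline{AB}^{rec}\big)\leq \dim\big(\overline{A}^{rec}\big)\,\dim\big(\overline{B}^{rec}\big)$$ (dimensions taken in $\mathbb N\cup\{\infty\}$). In particular, the matrix product of two recurrence matrices $A\in\mathrm{Rec}_{p\times r}(\mathbf K)$, $B\in\mathrm{Rec}_{r\times q}(\mathbf K)$ is a recurrence matrix.
   Context: For $p,q,l\in\mathbb N$, $\mathcal M_{p\times q}^l$ is the set of pairs $(U,W)$ of words of common length $l$ with $U\in\{0,\dots,p-1\}^l$, $W\in\{0,\dots,q-1\}^l$, and $\mathcal M_{p\times q}=\bigcup_{l\ge0}\mathcal M_{p\times q}^l$, a monoid under concatenation $(U,W)(U',W')=(UU',WW')$. $\mathbf K^{\mathcal M_{p\times q}}$ is the vector space of all functions $\mathcal M_{p\times q}\to\mathbf K$; the value of $A$ at $(U,W)$ is written $A[U,W]$. For $(S,T)\in\mathcal M_{p\times q}$ the shift map $\rho(S,T)$ is the linear endomorphism of $\mathbf K^{\mathcal M_{p\times q}}$ given by $(\rho(S,T)A)[U,W]=A[US,WT]$. The recursive closure $\overline{A}^{rec}$ of $A$ is the linear span of $\{\rho(S,T)A:(S,T)\in\mathcal M_{p\times q}\}$; its dimension is the complexity of $A$, and $\mathrm{Rec}_{p\times q}(\mathbf K)$ (recurrence matrices) is the set of $A$ of finite complexity. The matrix product of $A\in\mathbf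 K^{\mathcal M_{p\times r}}$ and $B\in\mathbf K^{\mathcal M_{r\times q}}$ is $AB\in\mathbf K^{\mathcal M_{p\times q}}$ with $(AB)[U,W]=\sum_{V\in\{0,\dots,r-1\}^l}A[U,V]B[V,W]$ for $(U,W)\in\mathcal M_{p\times q}^l$. *)

(* Defs.v *)
From mathcomp Require Import all_boot all_algebra.
Unset Printing Implicit Defensive.
Import GRing.Theory.
Local Open Scope ring_scope.

(* Elements of K^{M_{p x q}}: functions on pairs (U,W) of words of common
   length l over alphabets {0..p-1} and {0..q-1}. *)
Definition recmat (K : fieldType) (p q : nat) : Type :=
  forall l : nat, l.-tuple 'I_p -> l.-tuple 'I_q -> K.

Definition recmat_eq (K : fieldType) (p q : nat) (A B : recmat K p q) : Prop :=
  forall l U W, A l U W = B l U W.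

Definition rho (K : fieldType) (p q k : nat) (S : k.-tuple 'I_p)
  (T : k.-tuple 'I_q) (A : recmat K p q) : recmat K p q :=
  fun l U W => A (l + k) (cat_tuple U S) (cat_tuple W T).

Definition monoid_elt (p q : nat) : Type :=
  {k : nat & (k.-tuple 'I_p * k.-tuple 'I_q)%type}.

Definition rho_elt (K : fieldType) (p q : nat) (s : monoid_elt p q)
  (A : recmat K p q) : recmat K p q :=
  @rho K p q (projT1 s) (projT2 s).1 (projT2 s).2 A.

Definition in_rec_closure (K : fieldType) (p q : nat) (A F : recmat K p q) : Prop :=
  exists (n : nat) (a : 'I_n -> K) (s : 'I_n -> monoid_elt p q),
    @recmat_eq K p q F (fun l U W => \sum_(i < n) a i * @rho_elt K p q (s i) A l U W).

(* dim(closure of A) <= d : any d+1 elements of the closure are linearly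
   dependent *)
Definition complexity_le (K : fieldType) (p q : nat) (A : recmat K p q) (d : nat) : Prop :=
  forall F : 'I_d.+1 -> recmat K p q,
    (forall i, @in_rec_closure K p q A (F i)) ->
    exists c : 'I_d.+1 -> K, (exists i, c i != 0) /\
      @recmat_eq K p q (fun l U W => \sum_(i < d.+1) c i * (F i) l U W)
                (fun _ _ _ => 0).

Definition is_recurrence (K : fieldType) (p q : nat) (A : recmat K p q) : Prop :=
  exists d : nat, @complexity_le K p q A d.

Definition recmat_mul (K : fieldType) (p r q : nat) (A : recmat K p r)
  (B : recmat K r q) : recmat K p q :=
  fun l U W => \sum_(V : l.-tuple 'I_r) A l U V * B l V W.
Arguments complexity_le {K p q} A d.
Arguments is_recurrence {K p q} A.
Arguments recmat_mul {K p r q} A B l U W.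

(* Main.v *)
Require Import Defs.
From mathcomp Require Import all_boot all_algebra.
From Stdlib Require Import Classical.
Unset Printing Implicit Defensive.
Import GRing.Theory.
Local Open Scope ring_scope.

Section Split.
Variables (K : fieldType) (T : finType) (l k : nat).

Lemma take_tP (V : (l + k).-tuple T) : size (take l V) == l.
Proof. by rewrite size_takel // size_tuple leq_addr. Qed.
Lemma drop_tP (V : (l + k).-tuple T) : size (drop l V) == k.
Proof. by rewrite size_drop size_tuple addKn. Qed.

Lemma sum_cat_tuple (f : (l + k).-tuple T -> K) :
  \sum_(V : (l + k).-tuple T) f V =
  \sum_(V : l.-tuple T) \sum_(R : k.-tuple T) f (cat_tuple V R).
Proof.
rewrite pair_big /=.
rewrite (reindex (fun pr : l.-tuple T * k.-tuple T => cat_tuple pr.1 pr.2)) //=.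
exists (fun V => (Tuple (take_tP V), Tuple (drop_tP V))).
  move=> [U R] _ /=; congr pair; apply: val_inj => /=.
    by rewrite take_size_cat // size_tuple.
  by rewrite drop_size_cat // size_tuple.
by move=> V _; apply: val_inj => /=; rewrite cat_take_drop.
Qed.
End Split.

Definition inSpan (K : fieldType) (p q : nat) (J : finType)
  (h : J -> recmat K p q) (F : recmat K p q) : Prop :=
  exists x : J -> K, forall l U W, F l U W = \sum_(j : J) x j * h j l U W.

Arguments inSpan {K p q J} h F.
Section Span.
Variables (K : fieldType) (p q : nat) (J : finType) (h : J -> recmat K p q).

Lemma span_eq (F G : recmat K p q) :
  (forall l U W, F l U W = G l U W) -> inSpan h G -> inSpan h F.
Proof. by move=> e [x Hx]; exists x => l U W; rewrite e Hx. Qed.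

Lemma span_scale_sum (I : Type) (r : seq I) (a : I -> K) (F : I -> recmat K p q) :
  (forall i, inSpan h (F i)) ->
  inSpan h (fun l U W => \sum_(i <- r) a i * F i l U W).
Proof.
move=> HF; elim: r => [|i r [x Hx]].
  by exists (fun _ => 0) => l U W; rewrite big_nil big1 // => j _; rewrite mul0r.
have [y Hy] := HF i.
exists (fun j => a i * y j + x j) => l U W.
rewrite big_cons Hx Hy mulr_sumr -big_split /=; apply: eq_bigr => j _.
by rewrite mulrA mulrDl.
Qed.

Lemma span_sum (I : Type) (r : seq I) (F : I -> recmat K p q) :
  (forall i, inSpan h (F i)) ->
  inSpan h (fun l U W => \sum_(i <- r) F i l U W).
Proof.
move=> HF; apply: span_eq (span_scale_sum _ r (fun _ => 1) F HF) => l U W.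
by apply: eq_bigr => i _; rewrite mul1r.
Qed.

Lemma span_dep (d : nat) (F : 'I_d.+1 -> recmat K p q) :
  (#|J| <= d)%N -> (forall i, inSpan h (F i)) ->
  exists c : 'I_d.+1 -> K, (exists i, c i != 0) /\
      @recmat_eq K p q (fun l U W => \sum_(i < d.+1) c i * (F i) l U W)
                (fun _ _ _ => 0).
Proof.
move=> hJ /fin_all_exists [C HC].
pose M : 'M[K]_(d.+1, #|J|) := \matrix_(i, j) C i (enum_val j).
have rk : \rank (kermx M) != 0%N.
  rewrite mxrank_ker subn_eq0 -ltnNge.
  by apply: (leq_ltn_trans (rank_leq_col M)); rewrite ltnS.
have [i0 Hi0] : exists i0, row i0 (kermx M) != 0.
  apply/existsP; apply: contraR rk; rewrite negb_exists => /forallP Hr.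
  rewrite mxrank_eq0; apply/eqP/row_matrixP => i; rewrite row0.
  by move: (Hr i); rewrite negbK => /eqP.
set c := row i0 (kermx M) in Hi0.
have cM : c *m M = 0 by rewrite /c -row_mul mulmx_ker row0.
have [j0 Hj0] : exists j0, c 0 j0 != 0.
  apply/existsP; apply: contraR Hi0; rewrite negb_exists => /forallP Hr.
  apply/eqP/rowP => j; rewrite mxE; move: (Hr j); rewrite negbK => /eqP.
  by move=> e0; rewrite [RHS]mxE -e0 /c [RHS]mxE.
exists (fun i => c 0 i); split; first by exists j0.
move=> l U W /=.
under eq_bigr => i _ do rewrite HC mulr_sumr.
rewrite exchange_big /= big1 // => j _.
have := congr1 (fun m : 'M[K]_(1, #|J|) => m 0 (enum_rank j)) cM.
rewrite !mxE /= => e.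
transitivity ((\sum_(i < d.+1) c 0 i * M i (enum_rank j)) * h j l U W); last by rewrite e mul0r.
rewrite mulr_suml; apply: eq_bigr => i _.
by rewrite [M _ _]mxE enum_rankK mulrA.
Qed.
End Span.
Arguments span_eq {K p q J h F G}.
Arguments span_scale_sum {K p q J h I} r a F.
Arguments span_sum {K p q J h I} r F.
Arguments span_dep {K p q J h d F}.

Section Mul.
Variables (K : fieldType) (p r q : nat).

Lemma span_mul (I J : finType) (f : I -> recmat K p r) (g : J -> recmat K r q)
  (F : recmat K p r) (G : recmat K r q) :
  inSpan f F -> inSpan g G ->
  inSpan (fun ij : I * J => recmat_mul (f ij.1) (g ij.2)) (recmat_mul F G).
Proof.
move=> [x Hx] [y Hy]; exists (fun ij => x ij.1 * y ij.2) => l U W.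
rewrite /recmat_mul.
transitivity (\sum_(V : l.-tuple 'I_r) \sum_(i : I) \sum_(j : J)
    x i * y j * (f i l U V * g j l V W)).
  apply: eq_bigr => V _; rewrite Hx Hy mulr_suml; apply: eq_bigr => i _.
  by rewrite mulr_sumr; apply: eq_bigr => j _; rewrite mulrACA.
rewrite exchange_big; under eq_bigr => i _ do rewrite exchange_big.
rewrite pair_big /=; apply: eq_bigr => [[i j]] _ /=.
by rewrite mulr_sumr.
Qed.
End Mul.

Arguments rho {K p q k} S T A l U W.
Arguments in_rec_closure {K p q} A F.
Arguments rho_elt {K p q} s A l U W.
Section Clos.
Variables (K : fieldType) (p r q : nat) (A : recmat K p r) (B : recmat K r q).

Lemma rho_mul k (S : k.-tuple 'I_p) (T : k.-tuple 'I_q) l U W :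
  rho S T (recmat_mul A B) l U W =
  \sum_(R : k.-tuple 'I_r) recmat_mul (rho S R A) (rho R T B) l U W.
Proof. by rewrite /rho /recmat_mul sum_cat_tuple exchange_big. Qed.

Lemma closure_span (J : finType) (h : J -> recmat K p q) :
  (forall k (S : k.-tuple 'I_p) (R : k.-tuple 'I_r) (T : k.-tuple 'I_q),
      inSpan h (recmat_mul (rho S R A) (rho R T B))) ->
  forall F, in_rec_closure (recmat_mul A B) F -> inSpan h F.
Proof.
move=> H F [n [a [s HF]]]; apply: (span_eq HF).
apply: span_scale_sum => i.
case: (s i) => k [S T] /=.
rewrite /rho_elt /=.
eapply span_eq; first by move=> l U W; exact: rho_mul.
by apply: span_sum.
Qed.
End Clos.
Arguments closure_span {K p r q A B J h}.
Arguments span_mul {K p r q I J f g F G}.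

Section Basis.
Variables (K : fieldType) (p q : nat) (A : recmat K p q).

Definition indep {k} (h : 'I_k -> recmat K p q) :=
  forall c : 'I_k -> K,
    @recmat_eq K p q (fun l U W => \sum_(i < k) c i * h i l U W) (fun _ _ _ => 0) ->
    forall i, c i = 0.

Definition ext {k} (h : 'I_k -> recmat K p q) (F : recmat K p q) : 'I_k.+1 -> recmat K p q :=
  fun i => if unlift ord_max i is Some j then h j else F.

Lemma ext_indep k (h : 'I_k -> recmat K p q) F :
  indep h -> ~ inSpan h F -> indep (ext h F).
Proof.
move=> Ih nF c Hc.
have Hs l U W : c ord_max * F l U W +
    \sum_(j < k) c (lift ord_max j) * h j l U W = 0.
  transitivity (\sum_(i < k.+1) c i * ext h F i l U W); last exact: Hc.
  rewrite (bigD1_ord ord_max) //= /ext unlift_none.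
  by congr (_ + _); apply: eq_bigr => j _; rewrite liftK.
have cm : c ord_max = 0.
  apply/eqP; apply/negPn/negP => nz; apply: nF.
  exists (fun j => - (c (lift ord_max j) / c ord_max)) => l U W.
  apply: (mulfI nz); rewrite mulr_sumr.
  have := Hs l U W => /eqP; rewrite addr_eq0 => /eqP ->.
  rewrite -sumrN; apply: eq_bigr => j _.
  by rewrite mulNr mulrN mulrA mulrCA divff // mulr1 ?mulrN.
have cl : forall j, c (lift ord_max j) = 0.
  apply: Ih => l U W; have := Hs l U W; rewrite cm mul0r add0r => ->; done.
move=> i; case: (unliftP ord_max i) => [j ->|->] //.
Qed.

Lemma basis_aux m : complexity_le A m -> forall k, (k <= m.+1)%N ->
  (exists a, (a <= m)%N /\ exists f : 'I_a -> recmat K p q,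
       forall F, in_rec_closure A F -> inSpan f F) \/
  exists h : 'I_k -> recmat K p q, (forall i, in_rec_closure A (h i)) /\ indep h.
Proof.
move=> Hc; elim=> [_|k IH Hk].
  right; exists (fun _ => A).
  by split => [[]|c _ []].
have [L|[h [Hh Ih]]] := IH (ltnW Hk); first by left.
case: (classic (forall F, in_rec_closure A F -> inSpan h F)) => [Hsp|Hn].
  by left; exists k; split => //; exists h.
have [F HF] := not_all_ex_not _ _ Hn.
have [F1 F2] := imply_to_and _ _ HF.
right; exists (ext h F); split; last exact: ext_indep.
by move=> i; rewrite /ext; case: (unlift ord_max i).
Qed.

Lemma basis_exists m : complexity_le A m ->
  exists a, (a <= m)%N /\ exists f : 'I_a -> recmat K p q,
       forall F, in_rec_closure A F -> inSpan f F.
Proof.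
move=> Hc; have [//|[h [Hh Ih]]] := basis_aux m Hc m.+1 (leqnn m.+1).
have [c [[i ci] Hs]] := Hc h Hh.
by rewrite (Ih c Hs i) eqxx in ci.
Qed.
End Basis.
Arguments basis_exists {K p q A m}.

Lemma rho_in (K : fieldType) (p q : nat) (A : recmat K p q) k
  (S : k.-tuple 'I_p) (T : k.-tuple 'I_q) : in_rec_closure A (rho S T A).
Proof.
exists 1%N, (fun _ => 1), (fun _ => existT _ k (S, T)) => l U W.
by rewrite big_ord1 mul1r.
Qed.

Lemma zero_left (K : fieldType) (p r q : nat) (A : recmat K p r) (B : recmat K r q) :
  complexity_le A 0 -> complexity_le (recmat_mul A B) 0.
Proof.
move=> HA; have [a [ha [f Hf]]] := basis_exists HA.
move: f Hf; rewrite leqn0 in ha; rewrite (eqP ha) => f Hf F HF.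
apply: (span_dep (h := fun _ : 'I_0 => recmat_mul A B)) => //; first by rewrite card_ord.
move=> i; apply: (closure_span _ (F i) (HF i)) => k S R T.
have [x Hx] := Hf _ (rho_in _ _ _ A _ S R).
exists (fun _ => 0) => l U W; rewrite big_ord0 /recmat_mul big1 // => V _.
by rewrite Hx big_ord0 mul0r.
Qed.

Lemma zero_right (K : fieldType) (p r q : nat) (A : recmat K p r) (B : recmat K r q) :
  complexity_le B 0 -> complexity_le (recmat_mul A B) 0.
Proof.
move=> HB; have [a [ha [f Hf]]] := basis_exists HB.
move: f Hf; rewrite leqn0 in ha; rewrite (eqP ha) => f Hf F HF.
apply: (span_dep (h := fun _ : 'I_0 => recmat_mul A B)) => //; first by rewrite card_ord.
move=> i; apply: (closure_span _ (F i) (HF i)) => k S R T.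
have [x Hx] := Hf _ (rho_in _ _ _ B _ R T).
exists (fun _ => 0) => l U W; rewrite big_ord0 /recmat_mul big1 // => V _.
by rewrite Hx big_ord0 mulr0.
Qed.

Lemma prod_bound (K : fieldType) (p r q : nat) (A : recmat K p r) (B : recmat K r q) m n :
  complexity_le A m -> complexity_le B n -> complexity_le (recmat_mul A B) (m * n).
Proof.
move=> HA HB; have [a [ha [f Hf]]] := basis_exists HA.
have [b [hb [g Hg]]] := basis_exists HB.
move=> F HF.
apply: (span_dep (h := fun ij : 'I_a * 'I_b => recmat_mul (f ij.1) (g ij.2))).
  by rewrite card_prod !card_ord leq_mul.
move=> i; apply: (closure_span _ (F i) (HF i)) => k S R T.
exact: span_mul (Hf _ (rho_in _ _ _ A _ S R)) (Hg _ (rho_in _ _ _ B _ R T)).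
Qed.

Theorem mainTheorem1 (K : fieldType) (p q r : nat)
  (A : recmat K p r) (B : recmat K r q) :
  (forall m n : nat, complexity_le A m -> complexity_le B n ->
     complexity_le (recmat_mul A B) (m * n)) /\
  (complexity_le A 0 -> complexity_le (recmat_mul A B) 0) /\
  (complexity_le B 0 -> complexity_le (recmat_mul A B) 0) /\
  (is_recurrence A -> is_recurrence B -> is_recurrence (recmat_mul A B)).
Proof.
split; first exact: prod_bound.
split; first exact: zero_left.
split; first exact: zero_right.
by move=> [m HA] [n HB]; exists (m * n)%N; apply: prod_bound.
Qed.
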